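(* Each of the following argument forms is not valid, i.e. in each item there exist formulas $\alpha,\beta,\delta$ for which the stated failure occurs: (1) $\alpha\nvDash\alpha\land\alpha$; (2) $\alpha\land\beta\nvDash\beta\land\alpha$; (3) $\alpha\land(\beta\land\delta)\nvDash(\alpha\land\beta)\land\delta$; (4) $(\alpha\land\beta)\land\delta\nvDash\alpha\land(\beta\land\delta)$; (5) $\alpha\land(\beta\lor\delta)\nvDash(\alpha\land\beta)\lor(\alpha\land\delta)$; (6) $(\alpha\land\beta)\lor(\alpha\land\delta)\nvDash\alpha\land(\beta\lor\delta)$; (7) it is not the case that $\delta\vDash\alpha$ and $\delta\vDash\beta$ always imply $\delta\vDash\alpha\land\beta$; (8) $\alpha\land\lnot\alpha\nvDash\beta$; (9) $\alpha\uplus\beta\nvDash\beta\uplus\alpha$; (10) $\alpha\uplus\beta\nvDash\alpha\lor\beta$, and $\alpha\uplus\beta\nvDash\lnot\alpha\lor\lnot\beta$.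
   Context: Hilbert spaces and states: for $n\ge1$, $\mathcal H^{(n)}=(\mathbb C^2)^{\otimes n}$ with canonical basis $|x_1,\dots,x_n\rangle$ ($x_i\in\{0,1\}$, $|0\rangle=(1,0)$, $|1\rangle=(0,1)$); $\mathfrak D(\mathcal H^{(n)})$ is the set of density operators (qumixes). A truth-perspective is a unitary $\mathfrak T$ on $\mathbb C^2$, $\mathfrak T^{(n)}=\mathfrak T^{\otimes n}$. $^{\mathfrak T}P_1^{(n)}$ (resp. $^{\mathfrak T}P_0^{(n)}$) is the projection onto the span of the $\mathfrak T^{(n)}|x_1,\dots,x_n\rangle$ with $x_n=1$ (resp. $0$). $\mathtt p_{\mathfrak T}(\rho)=\mathrm{tr}(^{\mathfrak T}P_1^{(n)}\rho)$, and $\rho\preceq_{\mathfrak T}\sigma$ iff $\mathtt p_{\mathfrak T}(\rho)\le\mathtt p_{\mathfrak T}(\sigma)$. $Red^{(j_1,\dots,j_s)}_{[n_1,\dots,n_t]}(\rho)$ is the reduced state of $\rho$ on factors $j_1,\dots,j_s$ of $\mathcal H^{(n_1)}\otimes\cdots\otimes\mathcal H^{(n_t)}$. Gates (canonical basis, extended linearly): $\mathtt{NOT}^{(n)}|x_1..x_n\rangle=|x_1..x_{n-1}\rangle\otimes|1-x_n\rangle$; $\sqrt{\mathtt I}^{(n)}|x_1..x_n\rangle=|x_1..x_{n-1}\rangle\otimes\frac1{\sqrt2}((-1)^{x_n}|x_n\rangle+|1-x_n\rangle)$; $\sqrt{\mathtt{NOT}}^{(n)}|x_1..x_n\rangle=|x_1..x_{n-1}\rangle\otimes(\frac{1-i}2|x_n\rangle+\frac{1+i}2|1-x_n\rangle)$;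 $\mathtt{XOR}^{(m,n)}|x_1..x_m,y_1..y_n\rangle=|x_1..x_m,y_1..y_{n-1}\rangle\otimes|x_m\oplus y_n\rangle$; $\mathtt T^{(m,n,p)}|x_1..x_m,y_1..y_n,z_1..z_p\rangle=|x_1..x_m,y_1..y_n,z_1..z_{p-1}\rangle\otimes|x_my_n\oplus z_p\rangle$ ($\oplus$ addition mod 2). For a gate $G$ on $\mathcal H^{(n)}$: $G_{\mathfrak T}=\mathfrak T^{(n)}G\mathfrak T^{(n)\dagger}$, $^{\mathfrak D}G_{\mathfrak T}(\rho)=G_{\mathfrak T}\rho G_{\mathfrak T}^\dagger$. Language: formulas built from atomic formulas (including distinguished atoms $\mathbf t,\mathbf f$) with unary $\lnot,\sqrt{id},\sqrt\lnot$, binary $\uplus$, ternary $\intercal$; $\alpha\land\beta:=\intercal(\alpha,\beta,\mathbf f)$, $\alpha\lor\beta:=\lnot(\lnot\alpha\land\lnot\beta)$. $At(\alpha)$ = number of occurrences of atomic formulas in $\alpha$. Syntactical tree: $Level_1^\alpha=(\alpha)$; $Level_{i+1}^\alpha$ is obtained from $Level_i^\alpha=(\beta_1,\dots,\beta_r)$ by replacing each non-atomic $\beta_j$ by its immediate subformulas (arguments, in order) and keeping atomic $\beta_j$; the last level $Level_h^\alpha$ lists all atomic occurrences. $\mathcal H^{(At\alpha)}=\bigotimes_j\mathcal H^{(At\beta_j)}$. The $\mathfrak T$-gate $G^\alpha_{\mathfrak T(i)}$ ($1\le i<h$) is the tensor product over $j$ of: identity of $\mathbb C^2$ if $\beta_j$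 atomic; $\mathtt{NOT}_{\mathfrak T}^{(At\beta)}$, $\sqrt{\mathtt I}_{\mathfrak T}^{(At\beta)}$, $\sqrt{\mathtt{NOT}}_{\mathfrak T}^{(At\beta)}$ for $\lnot\beta,\sqrt{id}\beta,\sqrt\lnot\beta$; $\mathtt{XOR}_{\mathfrak T}^{(At\beta',At\beta'')}$ for $\beta'\uplus\beta''$; $\mathtt T_{\mathfrak T}^{(At\beta',At\beta'',At\beta''')}$ for $\intercal(\beta',\beta'',\beta''')$. Holistic model: a map $\mathtt{Hol}_{\mathfrak T}$ assigning to each level $Level_i^\alpha$ of each formula $\alpha$ a qumix in $\mathfrak D(\mathcal H^{(At\alpha)})$ such that (a) $\mathtt{Hol}_{\mathfrak T}(Level_i^\alpha)={}^{\mathfrak D}G^\alpha_{\mathfrak T(i)}(\mathtt{Hol}_{\mathfrak T}(Level_{i+1}^\alpha))$ for $1\le i<h$; (b) (normality) for each $\gamma$, with the contextual meaning of the occurrence $\beta_j$ in $Level_i^\gamma=(\beta_1,\dots,\beta_r)$ defined as $Red^{(j)}_{[At\beta_1,\dots,At\beta_r]}(\mathtt{Hol}_{\mathfrak T}(Level_i^\gamma))$, all occurrences of the same subformula $\beta$ in the tree of $\gamma$ have the same contextual meaning, denoted $\mathtt{Hol}^\gamma_{\mathfrak T}(\beta)$; (c) every occurrence of $\mathbf f$ (resp. $\mathbf t$) has contextual meaning $^{\mathfrak T}P_0^{(1)}$ (resp. $^{\mathfrak T}P_1^{(1)}$). Logical consequence: $\alpha\vDash\beta$ iff for every truth-perspective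 $\mathfrak T$, every formula $\gamma$ having both $\alpha$ and $\beta$ as subformulas (a formula counts as a subformula of itself), and every holistic model $\mathtt{Hol}_{\mathfrak T}$, $\mathtt{Hol}^\gamma_{\mathfrak T}(\alpha)\preceq_{\mathfrak T}\mathtt{Hol}^\gamma_{\mathfrak T}(\beta)$; $\alpha\nvDash\beta$ means that $\alpha\vDash\beta$ fails. *)

(* Defs.v *)
From mathcomp Require Import all_boot all_algebra.
From mathcomp Require Import complex Rstruct.
Set Implicit Arguments.
Unset Strict Implicit.
Unset Printing Implicit Defensive.
Import GRing.Theory Num.Theory.
Local Open Scope ring_scope.

Definition C : numClosedFieldType := Rdefinitions.R[i].

(** Canonical basis of H^(n) = (C^2)^{\otimes n}: |x_1 ... x_n>, encoded as
    x : 'I_n -> bool (position k is the qubit x_{k+1}; false = |0>, true = |1>). *)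
Definition B (n : nat) := {ffun 'I_n -> bool}.

(** k-th bit (0-based) of a basis vector, false when out of range. *)
Definition bit n (x : B n) (k : nat) : bool :=
  if @insub nat (fun k => k < n)%N 'I_n k is Some i then x i else false.

Definition setbit n (x : B n) (k : nat) (b : bool) : B n :=
  [ffun i : 'I_n => if val i == k then b else x i].

(** Operators on H^(n), given by their matrix entries <x|A|y> in the
    canonical basis. *)
Definition op (n : nat) := B n -> B n -> C.

Definition opeq n (A A' : op n) : Prop := forall x y, A x y = A' x y.
Definition mulop n (A A' : op n) : op n := fun x y => \sum_(z : B n) A x z * A' z y.
Definition adjop n (A : op n) : op n := fun x y => (A y x)^*.
Definition idop n : op n := fun x y => (x == y)%:R.
Arguments idop n : clear implicits.
Definition trop n (A : op n) : C := \sum_(x : B n) A x x.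

Definition is_density n (rho : op n) : Prop :=
  (forall v : B n -> C, 0 <= \sum_(x : B n) \sum_(y : B n) (v x)^* * rho x y * v y)
  /\ trop rho = 1.

(** Truth perspectives: unitary operators on C^2 (entries T a b = <a|T|b>). *)
Definition unitary2 (T : bool -> bool -> C) : Prop :=
  (forall a b, \sum_(c : bool) T a c * (T b c)^* = (a == b)%:R) /\
  (forall a b, \sum_(c : bool) (T c a)^* * T c b = (a == b)%:R).

Definition Tn (T : bool -> bool -> C) n : op n :=
  fun x y => \prod_(i < n) T (x i) (y i).
Arguments Tn T n : clear implicits.

Definition conjT (T : bool -> bool -> C) n (G : op n) : op n :=
  mulop (Tn T n) (mulop G (adjop (Tn T n))).

Definition chan n (G rho : op n) : op n := mulop G (mulop rho (adjop G)).

Definition P1 (T : bool -> bool -> C) n : op n :=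
  fun x y => \sum_(z : B n | bit z n.-1) Tn T n x z * (Tn T n y z)^*.
Definition P0 (T : bool -> bool -> C) n : op n :=
  fun x y => \sum_(z : B n | ~~ bit z n.-1) Tn T n x z * (Tn T n y z)^*.

Arguments P1 T n : clear implicits.
Arguments P0 T n : clear implicits.
Definition prob (T : bool -> bool -> C) n (rho : op n) : C := trop (mulop (P1 T n) rho).

(** Gates (matrix entries <x|G|y>, where G|y> is given on basis vectors). *)
Definition NOTg n : op n := fun x y => (x == setbit y n.-1 (~~ bit y n.-1))%:R.

Arguments NOTg n : clear implicits.
Definition same_but_last n (x y : B n) : bool :=
  [forall i : 'I_n, (val i != n.-1) ==> (x i == y i)].

Definition sqrtIg n : op n := fun x y =>
  if same_but_last x y then
    (if bit x n.-1 == bit y n.-1 then (if bit y n.-1 then -1 else 1) / sqrtC 2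
     else 1 / sqrtC 2)
  else 0.

Arguments sqrtIg n : clear implicits.
Definition sqrtNOTg n : op n := fun x y =>
  if same_but_last x y then
    (if bit x n.-1 == bit y n.-1 then (1 - 'i) / 2 else (1 + 'i) / 2)
  else 0.

Arguments sqrtNOTg n : clear implicits.
Definition XORg m n : op (m + n) := fun x y =>
  (x == setbit y (m + n).-1 (addb (bit y m.-1) (bit y (m + n).-1)))%:R.

Arguments XORg m n : clear implicits.
Definition TOFg m n p : op (m + n + p) := fun x y =>
  (x == setbit y (m + n + p).-1
          (addb (bit y m.-1 && bit y (m + n).-1) (bit y (m + n + p).-1)))%:R.

Arguments TOFg m n p : clear implicits.

Inductive form : Type :=
  | Atom of nat
  | Tr
  | Fa
  | Neg of form
  | Sqid of form
  | Sqneg of form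
  | Xor of form & form
  | Tof of form & form & form.

Definition And (a b : form) : form := Tof a b Fa.
Definition Or (a b : form) : form := Neg (And (Neg a) (Neg b)).

Fixpoint At (a : form) : nat :=
  match a with
  | Atom _ | Tr | Fa => 1
  | Neg b | Sqid b | Sqneg b => At b
  | Xor b c => At b + At c
  | Tof b c d => At b + At c + At d
  end.

Fixpoint subf (a g : form) : Prop :=
  a = g \/
  match g with
  | Atom _ | Tr | Fa => False
  | Neg b | Sqid b | Sqneg b => subf a b
  | Xor b c => subf a b \/ subf a c
  | Tof b c d => subf a b \/ subf a c \/ subf a d
  end.

Definition expand (a : form) : seq form :=
  match a with
  | Atom _ | Tr | Fa => [:: a]
  | Neg b | Sqid b | Sqneg b => [:: b]
  | Xor b c => [:: b; c]
  | Tof b c d => [:: b; c; d]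
  end.

Fixpoint level_aux (g : form) (k : nat) : seq form :=
  match k with
  | 0 => [:: g]
  | k'.+1 => flatten (map expand (level_aux g k'))
  end.

(** Level_i^g, for i >= 1. *)
Definition level (g : form) (i : nat) : seq form := level_aux g i.-1.

Fixpoint depth (a : form) : nat :=
  match a with
  | Atom _ | Tr | Fa => 0
  | Neg b | Sqid b | Sqneg b => (depth b).+1
  | Xor b c => (maxn (depth b) (depth c)).+1
  | Tof b c d => (maxn (depth b) (maxn (depth c) (depth d))).+1
  end.

(** h: the index of the last level (all entries atomic). *)
Definition height (g : form) : nat := (depth g).+1.

(** Position of the first qubit of the j-th entry (0-based) of a level. *)
Definition offset (l : seq form) (j : nat) : nat := sumn (map At (take j l)).

Definition restr N (x : B N) (off m : nat) : B m := [ffun i : 'I_m => bit x (off + i)].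

Arguments restr N x off m : clear implicits.

Definition local_gate (T : bool -> bool -> C) (b : form) : op (At b) :=
  match b as b0 return op (At b0) with
  | Atom _ | Tr | Fa => idop 1
  | Neg a => conjT T (NOTg (At a))
  | Sqid a => conjT T (sqrtIg (At a))
  | Sqneg a => conjT T (sqrtNOTg (At a))
  | Xor a c => conjT T (XORg (At a) (At c))
  | Tof a c d => conjT T (TOFg (At a) (At c) (At d))
  end.

Arguments local_gate T b : clear implicits.

Fixpoint layer (T : bool -> bool -> C) N (l : seq form) (off : nat) : op N :=
  match l with
  | [::] => fun _ _ => 1
  | b :: l' => fun x y =>
      local_gate T b (restr N x off (At b)) (restr N y off (At b)) * layer T l' (off + At b) x y
  end.

Arguments layer T N l off : clear implicits.

Definition levelgate (T : bool -> bool -> C) (g : form) (i : nat) : op (At g) :=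
  layer T (At g) (level g i) 0.

Arguments levelgate T g i : clear implicits.

(** Reduced state on the block [off, off + m) (partial trace over the rest). *)
Definition merge N m (z : B N) (off : nat) (x : B m) : B N :=
  [ffun i : 'I_N => if (off <= i < off + m)%N then bit x (i - off) else z i].

Definition red N (rho : op N) (off m : nat) : op m := fun x y =>
  \sum_(z : B N | [forall i : 'I_N, (off <= i < off + m)%N ==> ~~ z i])
     rho (merge z off x) (merge z off y).

Arguments red N rho off m : clear implicits.

Definition occurs (g b : form) (i j : nat) : Prop :=
  [/\ (1 <= i <= height g)%N, (j < size (level g i))%N & nth Fa (level g i) j = b].

Definition ctx (Hol : forall g : form, nat -> op (At g)) (g b : form) (i j : nat) : op (At b) :=
  red (At g) (Hol g i) (offset (level g i) j) (At b).

Arguments ctx Hol g b i j : clear implicits.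

(** Holistic models (Hol g i = Hol_T(Level_i^g)). *)
Definition holistic (T : bool -> bool -> C) (Hol : forall g : form, nat -> op (At g)) : Prop :=
  [/\ (forall g i, (1 <= i <= height g)%N -> is_density (Hol g i)),
      (forall g i, (1 <= i < height g)%N ->
         opeq (Hol g i) (chan (levelgate T g i) (Hol g i.+1))),
      (forall g b i j i' j', occurs g b i j -> occurs g b i' j' ->
         opeq (ctx Hol g b i j) (ctx Hol g b i' j')),
      (forall g i j, occurs g Fa i j -> opeq (ctx Hol g Fa i j) (P0 T 1)) &
      (forall g i j, occurs g Tr i j -> opeq (ctx Hol g Tr i j) (P1 T 1))].

Definition entails (a b : form) : Prop :=
  forall (T : bool -> bool -> C), unitary2 T ->
  forall g : form, subf a g -> subf b g ->
  forall Hol : forall g : form, nat -> op (At g), holistic T Hol ->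
  forall i j i' j', occurs g a i j -> occurs g b i' j' ->
    prob T (ctx Hol g a i j) <= prob T (ctx Hol g b i' j').

(* Main.v *)
Require Import Defs.
From mathcomp Require Import all_boot all_algebra.
From mathcomp Require Import all_order complex Rstruct ring zify.
Set Implicit Arguments.
Unset Strict Implicit.
Unset Printing Implicit Defensive.
Import GRing.Theory Num.Theory.
Local Open Scope ring_scope.


Lemma bitE N (x : B N) (i : 'I_N) : bit x i = x i.
Proof. by rewrite /bit insubT //= => H; congr (x _); apply: val_inj. Qed.

Lemma bit_out N (x : B N) k : (N <= k)%N -> bit x k = false.
Proof. by move=> H; rewrite /bit insubF // ltnNge H. Qed.

Lemma bitP N (x y : B N) : (forall k, (k < N)%N -> bit x k = bit y k) -> x = y.
Proof. by move=> H; apply/ffunP=> i; rewrite -!bitE H. Qed.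

Lemma bit_fn N (x : B N) (f : nat -> bool) k :
  (forall i : 'I_N, x i = f i) -> bit x k = (k < N)%N && f k.
Proof.
move=> H; case: (ltnP k N) => Hk /=; last by rewrite bit_out.
by rewrite /bit insubT /= H.
Qed.

Lemma bit_restr N (x : B N) off m k :
  bit (restr N x off m) k = (k < m)%N && bit x (off + k).
Proof. by apply: (@bit_fn _ _ (fun k => bit x (off + k))) => i; rewrite ffunE. Qed.

Lemma bit_merge N m (z : B N) off (u : B m) k :
  bit (Defs.merge z off u) k =
  (k < N)%N && (if (off <= k < off + m)%N then bit u (k - off) else bit z k).
Proof.
case: (ltnP k N) => Hk /=; last by rewrite bit_out.
rewrite (@bit_fn _ _ (fun k => if (off <= k < off + m)%N then bit u (k - off) else bit z k)) ?Hk //.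
by move=> i; rewrite ffunE bitE.
Qed.

Lemma bit_setbit N (x : B N) j b k :
  bit (setbit x j b) k = (k < N)%N && (if k == j then b else bit x k).
Proof.
case: (ltnP k N) => Hk /=; last by rewrite bit_out.
rewrite (@bit_fn _ _ (fun k => if k == j then b else bit x k)) ?Hk //.
by move=> i; rewrite ffunE bitE.
Qed.

Definition zB N (off : nat) (x : B N) : bool := [forall i : 'I_N, (i < off)%N ==> ~~ x i].

Lemma zBP N off (x : B N) : reflect (forall k, (k < off)%N -> bit x k = false) (zB off x).
Proof.
apply: (iffP forallP) => H.
  move=> k Hk; case: (ltnP k N) => HN; last by rewrite bit_out.
  have := H (Ordinal HN) => /=; rewrite Hk /= -(bitE x (Ordinal HN)) /=.
  by move/negbTE.
move=> i; apply/implyP => Hi; by rewrite -bitE H.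
Qed.

Lemma restr_merge_same N m (z : B N) off (u : B m) :
  (off + m <= N)%N -> restr N (Defs.merge z off u) off m = u.
Proof.
move=> H; apply: bitP => k Hk.
rewrite bit_restr Hk bit_merge /= leq_addr ltn_add2l Hk addKn.
by rewrite (leq_trans _ H) // ltn_add2l.
Qed.

Lemma restr_merge_lo N m (z : B N) off (u : B m) o m' :
  (o + m' <= off)%N -> restr N (Defs.merge z off u) o m' = restr N z o m'.
Proof.
move=> H; apply: bitP => k Hk.
rewrite !bit_restr Hk /= bit_merge.
have -> : (off <= o + k)%N = false.
  apply/negbTE; rewrite -ltnNge; apply: (leq_trans _ H); by rewrite ltn_add2l.
case: (ltnP (o + k) N) => /= HN //; by rewrite bit_out.
Qed.

Lemma restr_merge_hi N m (z : B N) off (u : B m) o m' :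
  (off + m <= o)%N -> restr N (Defs.merge z off u) o m' = restr N z o m'.
Proof.
move=> H; apply: bitP => k Hk.
rewrite !bit_restr Hk /= bit_merge.
have -> : (o + k < off + m)%N = false.
  apply/negbTE; rewrite -leqNgt; apply: (leq_trans H); by rewrite leq_addr.
rewrite andbF /=.
case: (ltnP (o + k) N) => /= HN //; by rewrite bit_out.
Qed.

Lemma restr_restr N (y : B N) o M p m :
  (p + m <= M)%N -> restr M (restr N y o M) p m = restr N y (o + p) m.
Proof.
move=> H; apply: bitP => k Hk.
rewrite !bit_restr Hk /= addnA.
by rewrite (leq_trans _ H) // ltn_add2l.
Qed.


Definition z0 m : B m := [ffun => false].

Lemma bit_z0 m k : bit (z0 m) k = false.
Proof. by case: (ltnP k m) => H; [rewrite /bit insubT /= ffunE | rewrite bit_out]. Qed.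

Lemma sum_ind (T : finType) (a : T) (F : T -> C) :
  \sum_(u : T) (a == u)%:R * F u = F a.
Proof.
rewrite (bigD1 a) //= eqxx mul1r big1 ?addr0 // => u.
by rewrite eq_sym => /negbTE ->; rewrite mul0r.
Qed.

Lemma sum_split N m off (H : B N -> C) : (off + m <= N)%N ->
  \sum_(x | zB off x) H x =
  \sum_(u : B m) \sum_(x | zB (off + m) x) H (Defs.merge x off u).
Proof.
move=> Hm.
transitivity (\sum_(x | zB off x) \sum_(u : B m) (restr N x off m == u)%:R * H x).
  apply: eq_bigr => x _; by rewrite (sum_ind _ (fun _ => H x)).
rewrite exchange_big /=; apply: eq_bigr => u _.
transitivity (\sum_(x | zB off x && (restr N x off m == u)) H x).
  rewrite big_mkcondr /=; apply: eq_bigr => x _.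
  by case: (_ == _); rewrite ?mul1r ?mul0r.
rewrite (reindex_onto (fun x => Defs.merge x off u) (fun x => Defs.merge x off (z0 m))).
  apply: eq_bigl => x.
  rewrite restr_merge_same // eqxx andbT.
  apply/idP/idP.
    case/andP=> /zBP H1 /eqP H2; apply/zBP => k Hk.
    case: (ltnP k off) => Hko.
      have := H1 k Hko; rewrite bit_merge (leqNgt off k) Hko /=.
      by case: (ltnP k N) => HN /= //; rewrite bit_out.
    have := congr1 (fun y => bit y k) H2.
    rewrite /= bit_merge bit_merge bit_z0 Hko Hk /=.
    by case: (k < N)%N.
  move/zBP=> H1; apply/andP; split.
    apply/zBP => k Hk; rewrite bit_merge (leqNgt off k) Hk /= H1 ?andbF //.
    by rewrite (leq_trans Hk) // leq_addr.
  apply/eqP; apply: bitP => k Hk; rewrite bit_merge Hk /=.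
  case: ifP => [/andP[_ Hk2]| Hb].
    by rewrite bit_z0 H1.
  by rewrite bit_merge Hk Hb.
move=> x /andP[_ /eqP Hr]; apply: bitP => k Hk.
rewrite bit_merge Hk /=.
case: ifP => Hc; last by rewrite bit_merge Hk Hc.
case/andP: Hc => H1 H2.
by rewrite -Hr bit_restr subnKC // -(ltn_add2l off) subnKC // H2 /=.
Qed.

Lemma sum_zB_all N (H : B N -> C) :
  \sum_(x | zB N x) H x = H (z0 N).
Proof.
rewrite (big_pred1 (z0 N)) // => x /=.
apply/idP/eqP.
  move/zBP=> H1; apply: bitP => k Hk; by rewrite H1 // bit_z0.
move=> ->; apply/zBP => k _; exact: bit_z0.
Qed.

Lemma zB0 N (x : B N) : zB 0 x.
Proof. by apply/zBP. Qed.


Definition vec n := B n -> C.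
Definition blk := {m : nat & vec m}.
Definition mkb m (f : vec m) : blk := existT _ m f.

Fixpoint pF N (fs : seq blk) (off : nat) (x : B N) : C :=
  match fs with
  | [::] => 1
  | f :: fs' => projT2 f (restr N x off (projT1 f)) * pF fs' (off + projT1 f) x
  end.

Fixpoint pS (fs : seq blk) : C :=
  match fs with
  | [::] => 1
  | f :: fs' => (\sum_u projT2 f u) * pS fs'
  end.

Definition sz (fs : seq blk) : nat := sumn (map (fun f => projT1 f) fs).

Lemma sz_cons f fs : sz (f :: fs) = (projT1 f + sz fs)%N.
Proof. by []. Qed.

Lemma sz_cat fs1 fs2 : sz (fs1 ++ fs2) = (sz fs1 + sz fs2)%N.
Proof. by rewrite /sz map_cat sumn_cat. Qed.

Lemma pF_cat N fs1 fs2 off (x : B N) :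
  pF (fs1 ++ fs2) off x = pF fs1 off x * pF fs2 (off + sz fs1) x.
Proof.
elim: fs1 off => [|f fs IH] off /=; first by rewrite mul1r addn0.
by rewrite IH mulrA sz_cons addnA.
Qed.

Lemma pS_cat fs1 fs2 : pS (fs1 ++ fs2) = pS fs1 * pS fs2.
Proof. by elim: fs1 => [|f fs IH] /=; rewrite ?mul1r // IH mulrA. Qed.

Lemma pF_merge_hi N m fs o (z : B N) off (u : B m) :
  (off + m <= o)%N -> pF fs o (Defs.merge z off u) = pF fs o z.
Proof.
elim: fs o => [|f fs IH] o Ho //=.
rewrite restr_merge_hi // IH //; exact: (leq_trans Ho (leq_addr _ _)).
Qed.

Lemma pF_merge_lo N m fs o (z : B N) off (u : B m) :
  (o + sz fs <= off)%N -> pF fs o (Defs.merge z off u) = pF fs o z.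
Proof.
elim: fs o => [|f fs IH] o Ho //=.
rewrite sz_cons in Ho.
rewrite restr_merge_lo ?IH //; first by rewrite -addnA.
by apply: leq_trans Ho; rewrite addnA leq_addr.
Qed.

Lemma engine N fs off : (off + sz fs)%N = N ->
  \sum_(x : B N | zB off x) pF fs off x = pS fs.
Proof.
elim: fs off => [|[m f] fs IH] off Hs /=.
  by rewrite addn0 in Hs; rewrite -Hs sum_zB_all.
rewrite sz_cons /= in Hs.
rewrite (@sum_split _ m) ?(leq_trans _ (eq_leq Hs)) ?addnA ?leq_addr //.
rewrite big_distrl /=; apply: eq_bigr => u _.
rewrite -(IH (off + m)%N); last by rewrite -addnA.
rewrite big_distrr /=; apply: eq_bigr => x _.
rewrite restr_merge_same ?pF_merge_hi //.
by rewrite -Hs addnA leq_addr.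
Qed.

Lemma engine0 N fs : sz fs = N -> \sum_(x : B N) pF fs 0 x = pS fs.
Proof.
move=> H; rewrite -(@engine N fs 0) //; apply: eq_bigl => x; by rewrite zB0.
Qed.


Definition outer n (v : vec n) : op n := fun x y => v x * (v y)^*.
Definition nrm n (v : vec n) : C := \sum_x v x * (v x)^*.
Definition sqb (f : blk) : blk := mkb (fun u => projT2 f u * (projT2 f u)^*).

Lemma sz_sq fs : sz (map sqb fs) = sz fs.
Proof. by elim: fs => //= f fs IH; rewrite !sz_cons IH. Qed.

Lemma pF_sq N fs off (x : B N) :
  pF fs off x * (pF fs off x)^* = pF (map sqb fs) off x.
Proof.
elim: fs off => [|f fs IH] off /=; first by rewrite rmorph1 mulr1.
rewrite -IH rmorphM /=; by rewrite mulrACA.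
Qed.

Lemma pS_sq fs : pS (map sqb fs) = \prod_(f <- fs) nrm (projT2 f).
Proof. by elim: fs => [|f fs IH] /=; rewrite ?big_nil ?big_cons // IH. Qed.

Lemma nrm_pF N fs : sz fs = N -> nrm (pF fs 0 : vec N) = pS (map sqb fs).
Proof.
move=> H; rewrite /nrm -(@engine0 N) ?sz_sq //; apply: eq_bigr => x _; exact: pF_sq.
Qed.

Lemma blockcond N off m (z : B N) : (off + m <= N)%N ->
  [forall i : 'I_N, (off <= i < off + m)%N ==> ~~ z i] = (restr N z off m == z0 m).
Proof.
move=> Hm; apply/forallP/eqP => H.
  apply: bitP => k Hk; rewrite bit_restr bit_z0 Hk /=.
  have Hk2 : (off + k < N)%N by apply: leq_trans Hm; rewrite ltn_add2l.
  have := H (Ordinal Hk2); rewrite /= leq_addr ltn_add2l Hk /= -(bitE z (Ordinal Hk2)) /=.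
  by move/negbTE.
move=> i; apply/implyP => /andP[H1 H2].
have := congr1 (fun y => bit y (i - off)) H.
rewrite bit_restr bit_z0 subnKC // -(ltn_add2l off) subnKC // H2 bitE /=.
by move=> ->.
Qed.

Lemma red_pF N fs1 m (f : vec m) fs2 :
  (sz fs1 + m + sz fs2)%N = N -> pS (map sqb fs1) = 1 -> pS (map sqb fs2) = 1 ->
  forall x y, red N (outer (pF (fs1 ++ mkb f :: fs2) 0)) (sz fs1) m x y = outer f x y.
Proof.
move=> HN H1 H2 x y.
have Hm : (sz fs1 + m <= N)%N by rewrite -HN leq_addr.
rewrite /red /outer.
transitivity (f x * (f y)^* *
   \sum_(z : B N | [forall i : 'I_N, ((sz fs1) <= i < (sz fs1) + m)%N ==> ~~ z i])
      (pF (map sqb fs1) 0 z * pF (map sqb fs2) ((sz fs1) + m) z)).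
  rewrite big_distrr /=; apply: eq_bigr => z _.
  rewrite !pF_cat /= add0n !restr_merge_same //.
  rewrite !(@pF_merge_lo N m fs1) ?add0n // !(@pF_merge_hi N m fs2) //.
  rewrite -!pF_sq !rmorphM /=.
  set a := pF fs1 _ _; set b := pF fs2 _ _.
  set a' := a^*; set b' := b^*; set c := f x; set d := (f y)^*.
  ring.
rewrite -[RHS]mulr1; congr (_ * _).
transitivity (\sum_(z : B N) pF (map sqb fs1 ++ mkb (fun u : B m => (u == z0 m)%:R) :: map sqb fs2) 0 z).
  rewrite big_mkcond /=; apply: eq_bigr => z _.
  rewrite pF_cat /= add0n sz_sq blockcond //.
  by case: (_ == _); rewrite ?mul1r ?mul0r ?mulr0 // mulrCA mulrA.
rewrite (@engine0 N); last by rewrite sz_cat /= sz_cons /= !sz_sq addnA.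
rewrite pS_cat /= H1 H2 mul1r mulr1.
rewrite (eq_bigr (fun u => (z0 m == u)%:R * 1)); first by rewrite sum_ind.
by move=> u _; rewrite eq_sym mulr1.
Qed.


Definition Tid : bool -> bool -> C := fun a b => (a == b)%:R.

Lemma Tn_Tid n (x y : B n) : Tn Tid n x y = (x == y)%:R.
Proof.
rewrite /Tn /Tid; case: (x =P y) => [->|Hne].
  by rewrite big1 // => i _; rewrite eqxx.
have [i Hi] : exists i, x i != y i.
  apply/existsP; apply: contraNT (introN eqP Hne); rewrite negb_exists => /forallP H.
  by apply/eqP/ffunP => i; apply/eqP; have := H i; rewrite negbK.
by rewrite (bigD1 i) //= (negbTE Hi) mul0r.
Qed.

Lemma conjT_Tid n (G : op n) x y : conjT Tid G x y = G x y.
Proof.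
rewrite /conjT /mulop.
rewrite (eq_bigr (fun z => (x == z)%:R * \sum_z0 G z z0 * adjop (Tn Tid n) z0 y)); last first.
  by move=> z _; rewrite Tn_Tid.
rewrite sum_ind.
rewrite (eq_bigr (fun z => (y == z)%:R * G x z)); first by rewrite sum_ind.
move=> z _; rewrite /adjop Tn_Tid eq_sym.
by case: (_ == _); rewrite ?conjC1 ?conjC0 ?mulr1 ?mulr0 ?mul1r ?mul0r.
Qed.

Definition app n (G : op n) (v : vec n) : vec n := fun x => \sum_y G x y * v y.

Unset Implicit Arguments.
Fixpoint psi (v : nat -> bool) (b : Defs.form) (off : nat) {struct b} : vec (At b) :=
  match b as b0 return vec (At b0) with
  | Atom _ => fun u => (u == [ffun => v off])%:R
  | Tr => fun u => (u == [ffun => true])%:R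
  | Fa => fun u => (u == z0 1)%:R
  | Neg a => app (NOTg (At a)) (psi v a off)
  | Sqid a => app (sqrtIg (At a)) (psi v a off)
  | Sqneg a => app (sqrtNOTg (At a)) (psi v a off)
  | Xor a c => app (XORg (At a) (At c))
       (pF [:: mkb (psi v a off); mkb (psi v c (off + At a))] 0)
  | Tof a c d => app (TOFg (At a) (At c) (At d))
       (pF [:: mkb (psi v a off); mkb (psi v c (off + At a));
               mkb (psi v d (off + At a + At c))] 0)
  end.

Definition cv (v : nat -> bool) (b : Defs.form) (off : nat) : vec (At b) :=
  match b as b0 return vec (At b0) with
  | Atom n => psi v (Atom n) off
  | Tr => psi v Tr off
  | Fa => psi v Fa off
  | Neg a => psi v a off
  | Sqid a => psi v a off
  | Sqneg a => psi v a off
  | Xor a c => pF [:: mkb (psi v a off); mkb (psi v c (off + At a))] 0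
  | Tof a c d => pF [:: mkb (psi v a off); mkb (psi v c (off + At a));
               mkb (psi v d (off + At a + At c))] 0
  end.

Set Implicit Arguments.

Lemma app_conjT n (G : op n) w u : app (conjT Tid G) w u = app G w u.
Proof. by apply: eq_bigr => y _; rewrite conjT_Tid. Qed.

Lemma LG v b off u : app (local_gate Tid b) (cv v b off) u = psi v b off u.
Proof.
move: u; case: b => [n| | |a|a|a|a c|a c d] u /=; rewrite ?app_conjT //;
 by rewrite /app /idop sum_ind.
Qed.

Fixpoint mkpsi v (l : seq Defs.form) off : seq blk :=
  match l with
  | [::] => [::]
  | b :: l' => mkb (psi v b off) :: mkpsi v l' (off + At b)
  end.

Fixpoint mkcv v (l : seq Defs.form) off : seq blk :=
  match l with
  | [::] => [::]
  | b :: l' => mkb (cv v b off) :: mkcv v l' (off + At b)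
  end.

Lemma sz_mkpsi v l off : sz (mkpsi v l off) = sumn (map At l).
Proof. by elim: l off => //= b l IH off; rewrite sz_cons IH. Qed.

Lemma mkpsi_cat v l1 l2 off :
  mkpsi v (l1 ++ l2) off = mkpsi v l1 off ++ mkpsi v l2 (off + sumn (map At l1)).
Proof.
elim: l1 off => [|b l IH] off /=; first by rewrite addn0.
by rewrite IH addnA.
Qed.

Lemma sumn_expand b : sumn (map At (expand b)) = At b.
Proof. by case: b => //= *; rewrite ?addn0 ?addnA. Qed.

Lemma sumn_flat l : sumn (map At (flatten (map expand l))) = sumn (map At l).
Proof. by elim: l => //= b l IH; rewrite map_cat sumn_cat IH sumn_expand. Qed.

Lemma pF_expand N v b off (y : B N) :
  pF (mkpsi v (expand b) off) off y = cv v b off (restr N y off (At b)).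
Proof.
case: b => [n| | |a|a|a|a c|a c d] /=; rewrite ?mulr1 //.
  by rewrite !restr_restr ?addn0 ?add0n ?leq_addr.
rewrite !restr_restr ?addn0 ?add0n ?leq_addr ?addnA //.
by rewrite -addnA leq_addr.
Qed.

Lemma pF_flat N v l off (y : B N) :
  pF (mkpsi v (flatten (map expand l)) off) off y = pF (mkcv v l off) off y.
Proof.
elim: l off => [|b l IH] off //=.
rewrite mkpsi_cat pF_cat pF_expand sz_mkpsi sumn_expand IH //.
Qed.


Fixpoint mkLG N v (x : B N) (l : seq Defs.form) off : seq blk :=
  match l with
  | [::] => [::]
  | b :: l' => mkb (fun u : B (At b) => local_gate Tid b (restr N x off (At b)) u * cv v b off u)
               :: mkLG v x l' (off + At b)
  end.

Lemma sz_mkLG N v (x : B N) l off : sz (mkLG v x l off) = sumn (map At l).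
Proof. by elim: l off => //= b l IH off; rewrite sz_cons IH. Qed.

Lemma layer_mul N v (x y : B N) l off :
  layer Tid N l off x y * pF (mkcv v l off) off y = pF (mkLG v x l off) off y.
Proof.
elim: l off => [|b l IH] off /=; first by rewrite mulr1.
by rewrite -IH; ring.
Qed.

Lemma pS_mkLG N v (x : B N) l off : pS (mkLG v x l off) = pF (mkpsi v l off) off x.
Proof.
elim: l off => [|b l IH] off //=.
by rewrite IH; congr (_ * _); apply: LG.
Qed.

Lemma level_succ g i : (0 < i)%N -> level g i.+1 = flatten (map expand (level g i)).
Proof. by case: i. Qed.

Lemma sumn_level g i : sumn (map At (level g i)) = At g.
Proof.
rewrite /level; elim: i.-1 => [|k IH] /=; first by rewrite addn0.
by rewrite sumn_flat.
Qed.

Definition Psi v g i : vec (At g) := pF (mkpsi v (level g i) 0) 0.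
Arguments Psi v g i : clear implicits.

Lemma Psi_step v g i x : (0 < i)%N ->
  app (levelgate Tid g i) (Psi v g i.+1) x = Psi v g i x.
Proof.
move=> Hi; rewrite /app /levelgate /Psi level_succ //.
rewrite (eq_bigr (fun y => pF (mkLG v x (level g i) 0) 0 y)); last first.
  by move=> y _; rewrite pF_flat layer_mul.
by rewrite (@engine0 (At g)) ?sz_mkLG ?sumn_level // pS_mkLG.
Qed.


Lemma At_pos b : (0 < At b)%N.
Proof.
elim: b => //= [a Ha c Hc|a Ha c Hc d Hd]; by rewrite !addn_gt0 ?Ha.
Qed.

Lemma nrm_ext n (w w' : vec n) : (forall x, w x = w' x) -> nrm w = nrm w'.
Proof. by move=> H; apply: eq_bigr => x _; rewrite H. Qed.

Lemma bit_setbit_neq N (y : B N) L b M : M != L -> bit (setbit y L b) M = bit y M.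
Proof.
move=> H; rewrite bit_setbit (negbTE H).
by case: (ltnP M N) => // HM; rewrite bit_out.
Qed.

Lemma bit_setbit_eq N (y : B N) L b : (L < N)%N -> bit (setbit y L b) L = b.
Proof. by move=> H; rewrite bit_setbit H eqxx. Qed.

Lemma setbit_setbit N (y : B N) L b b' : setbit (setbit y L b) L b' = setbit y L b'.
Proof.
apply: bitP => k Hk; rewrite !bit_setbit Hk /=.
case: eqP => // ->; by rewrite bit_setbit_eq.
Qed.

Lemma setbit_id N (y : B N) L : setbit y L (bit y L) = y.
Proof.
apply: bitP => k Hk; rewrite !bit_setbit Hk /=.
by case: eqP => // ->.
Qed.

Lemma inv_setbit N L (Hf : B N -> bool) : (L < N)%N ->
  (forall y b, Hf (setbit y L b) = Hf y) ->
  involutive (fun y : B N => setbit y L (addb (Hf y) (bit y L))).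
Proof.
move=> HL HH y; apply: bitP => k Hk.
rewrite !bit_setbit Hk /=.
case: eqP => [->|_] //.
rewrite HH HL eqxx.
by rewrite addbA addbb.
Qed.

Definition fNOT n (y : B n) := setbit y n.-1 (~~ bit y n.-1).
Definition fXOR m n (y : B (m + n)) :=
  setbit y (m + n).-1 (addb (bit y m.-1) (bit y (m + n).-1)).
Definition fTOF m n p (y : B (m + n + p)) :=
  setbit y (m + n + p).-1 (addb (bit y m.-1 && bit y (m + n).-1) (bit y (m + n + p).-1)).

Lemma fNOT_inv n : (0 < n)%N -> involutive (@fNOT n).
Proof.
move=> Hn y.
have HL : (n.-1 < n)%N by rewrite ltn_predL.
exact: (@inv_setbit n n.-1 (fun _ => true) HL (fun _ _ => erefl) y).
Qed.

Lemma fXOR_inv m n : (0 < m)%N -> (0 < n)%N -> involutive (@fXOR m n).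
Proof.
move=> Hm Hn.
have HL : ((m + n).-1 < m + n)%N by lia.
have HM : m.-1 != (m + n).-1 by lia.
exact: (@inv_setbit _ _ (fun y => bit y m.-1) HL (fun y b => bit_setbit_neq y b HM)).
Qed.

Lemma fTOF_inv m n p : (0 < m)%N -> (0 < n)%N -> (0 < p)%N -> involutive (@fTOF m n p).
Proof.
move=> Hm Hn Hp.
have HL : ((m + n + p).-1 < m + n + p)%N by lia.
have HM : m.-1 != (m + n + p).-1 by lia.
have HM2 : (m + n).-1 != (m + n + p).-1 by lia.
apply: (@inv_setbit _ _ (fun y => bit y m.-1 && bit y (m + n).-1) HL).
by move=> y b; rewrite !bit_setbit_neq.
Qed.

Lemma app_perm n (f : B n -> B n) (w : vec n) x : involutive f ->
  app (fun x y => (x == f y)%:R) w x = w (f x).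
Proof.
move=> Hf; rewrite /app.
rewrite (eq_bigr (fun y => (f x == y)%:R * w y)); first by rewrite sum_ind.
by move=> y _; rewrite (inv_eq Hf).
Qed.

Lemma nrm_perm n (f : B n -> B n) (w : vec n) : involutive f ->
  nrm (fun x => w (f x)) = nrm w.
Proof.
move=> Hf; rewrite /nrm (reindex_inj (inv_inj Hf)) /=.
by apply: eq_bigr => x _; rewrite Hf.
Qed.

Lemma sbl_eq n (x y : B n) b : (0 < n)%N ->
  same_but_last x y && (bit y n.-1 == b) = (y == setbit x n.-1 b).
Proof.
move=> Hn; apply/idP/eqP.
  case/andP=> /forallP H /eqP Hb; apply: bitP => k Hk.
  rewrite bit_setbit Hk /=; case: eqP => [->|/eqP Hne] //.
  have := H (Ordinal Hk); rewrite /= Hne /= => /eqP.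
  by rewrite -!(bitE _ (Ordinal Hk)) /=.
move=> ->; rewrite bit_setbit_eq ?eqxx ?andbT; last by rewrite ltn_predL.
apply/forallP => i; apply/implyP => Hi.
by rewrite -!bitE bit_setbit_neq.
Qed.

Lemma last_term n (G : op n) (c : bool -> bool -> C) (w : vec n) x y b : (0 < n)%N ->
  (forall x y, G x y = if same_but_last x y then c (bit x n.-1) (bit y n.-1) else 0) ->
  (if bit y n.-1 == b then G x y * w y else 0) =
  (setbit x n.-1 b == y)%:R * (c (bit x n.-1) b * w (setbit x n.-1 b)).
Proof.
move=> Hn HG; have E := sbl_eq x y b Hn.
rewrite HG; case: (y =P setbit x n.-1 b) => [Hy|Hy].
  move: E; rewrite Hy eqxx => /andP[-> /eqP ->]; by rewrite eqxx mul1r.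
have -> : (setbit x n.-1 b == y) = false by apply/eqP => H; apply: Hy.
rewrite mul0r.
move: E; have -> : (y == setbit x n.-1 b) = false by apply/eqP.
case: (bit y n.-1 == b); rewrite ?andbT => // ->; by rewrite mul0r.
Qed.

Lemma app_last n (G : op n) (c : bool -> bool -> C) (w : vec n) x : (0 < n)%N ->
  (forall x y, G x y = if same_but_last x y then c (bit x n.-1) (bit y n.-1) else 0) ->
  app G w x = c (bit x n.-1) false * w (setbit x n.-1 false)
            + c (bit x n.-1) true * w (setbit x n.-1 true).
Proof.
move=> Hn HG; rewrite /app.
rewrite (eq_bigr (fun y => (if bit y n.-1 == false then G x y * w y else 0) +
                          (if bit y n.-1 == true then G x y * w y else 0))); last first.
  by move=> y _; case: (bit y n.-1); rewrite ?add0r ?addr0.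
rewrite big_split /=; congr (_ + _).
  rewrite (eq_bigr _ (fun y _ => last_term w x y false Hn HG)); exact: sum_ind.
rewrite (eq_bigr _ (fun y _ => last_term w x y true Hn HG)); exact: sum_ind.
Qed.

Lemma setbit_false_eq N (j : B N) L : (L < N)%N -> (setbit j L false == j) = ~~ bit j L.
Proof.
move=> HL; apply/eqP/idP.
  by move=> <-; rewrite bit_setbit_eq.
move/negbTE=> H; by rewrite -H setbit_id.
Qed.

Lemma nrm_split n L (h : B n -> C) : (L < n)%N ->
  \sum_x h x = \sum_(x | ~~ bit x L) (h (setbit x L false) + h (setbit x L true)).
Proof.
move=> HL; rewrite big_split /= (bigID (fun x => bit x L)) /= addrC.
congr (_ + _).
  apply: eq_bigr => x /negbTE Hx; by rewrite -Hx setbit_id.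
rewrite (reindex_onto (fun x => setbit x L true) (fun x => setbit x L false)).
  apply: eq_bigl => x; by rewrite bit_setbit_eq // setbit_setbit setbit_false_eq.
by move=> x Hx; rewrite setbit_setbit -{2}(setbit_id x L) Hx.
Qed.

Lemma unit2_id (c00 c01 c10 c11 a b : C) :
  c00 * c00^* + c10 * c10^* = 1 -> c01 * c01^* + c11 * c11^* = 1 ->
  c00 * c01^* + c10 * c11^* = 0 ->
  (c00 * a + c01 * b) * (c00 * a + c01 * b)^* + (c10 * a + c11 * b) * (c10 * a + c11 * b)^*
  = a * a^* + b * b^*.
Proof.
move=> H1 H2 H3.
have H4 : c01 * c00^* + c11 * c10^* = 0.
  have := congr1 (@Num.conj _) H3; rewrite rmorph0 rmorphD !rmorphM /= !conjCK => <-; ring.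
rewrite !rmorphD !rmorphM /=.
transitivity (a * a^* * (c00 * c00^* + c10 * c10^*) + b * b^* * (c01 * c01^* + c11 * c11^*)
   + a * b^* * (c00 * c01^* + c10 * c11^*) + b * a^* * (c01 * c00^* + c11 * c10^*)).
  ring.
by rewrite H1 H2 H3 H4 !mulr1 !mulr0 !addr0.
Qed.

Lemma nrm_last n (G : op n) (c : bool -> bool -> C) (w : vec n) : (0 < n)%N ->
  (forall x y, G x y = if same_but_last x y then c (bit x n.-1) (bit y n.-1) else 0) ->
  c false false * (c false false)^* + c true false * (c true false)^* = 1 ->
  c false true * (c false true)^* + c true true * (c true true)^* = 1 ->
  c false false * (c false true)^* + c true false * (c true true)^* = 0 ->
  nrm (app G w) = nrm w.
Proof.
move=> Hn HG H1 H2 H3.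
have HL : (n.-1 < n)%N by rewrite ltn_predL.
rewrite /nrm (nrm_split _ HL) [RHS](nrm_split _ HL).
apply: eq_bigr => x _.
rewrite !(app_last _ _ Hn HG) !bit_setbit_eq // !setbit_setbit.
exact: unit2_id.
Qed.

Lemma two_neq0 : (2 : C) != 0.
Proof. by rewrite pnatr_eq0. Qed.

Lemma s_conj : (1 / sqrtC 2 : C)^* = 1 / sqrtC 2.
Proof. by rewrite conj_Creal // rpred_div ?rpred1 ?sqrtC_real ?ler0n. Qed.

Lemma s_sq : (1 / sqrtC 2 : C) * (1 / sqrtC 2) = 1 / 2.
Proof. by rewrite !div1r -invfM -expr2 sqrtCK. Qed.

Notation ii := (@Num.imaginary C).

Lemma i_sq : (ii : C) * ii = -1.
Proof. by rewrite -expr2 sqrCi. Qed.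

Lemma a_conj : ((1 - ii) / 2 : C)^* = (1 + ii) / 2.
Proof. by rewrite fmorph_div rmorphB rmorph1 /= conjCi opprK conjC_nat. Qed.

Lemma b_conj : ((1 + ii) / 2 : C)^* = (1 - ii) / 2.
Proof. by rewrite fmorph_div rmorphD rmorph1 /= conjCi conjC_nat. Qed.

Definition cI (a b : bool) : C :=
  if a == b then (if b then -1 else 1) / sqrtC 2 else 1 / sqrtC 2.
Definition cN (a b : bool) : C :=
  if a == b then (1 - ii) / 2 else (1 + ii) / 2.

Lemma nrm_sqrtI n (w : vec n) : (0 < n)%N -> nrm (app (sqrtIg n) w) = nrm w.
Proof.
move=> Hn; apply: (@nrm_last _ _ cI) => //=; rewrite /cI /=.
- by rewrite s_conj s_sq; field; rewrite ?two_neq0.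
- rewrite mulNr rmorphN /= s_conj mulrNN s_sq; field; by rewrite ?two_neq0.
- rewrite mulNr rmorphN /= s_conj mulrN s_sq; by rewrite subrr.
Qed.

Lemma nrm_sqrtNOT n (w : vec n) : (0 < n)%N -> nrm (app (sqrtNOTg n) w) = nrm w.
Proof.
move=> Hn; have H2 := two_neq0; have Hi := i_sq.
apply: (@nrm_last _ _ cN) => //=; rewrite /cN /= ?a_conj ?b_conj.
- rewrite -[RHS](_ : 1 - (ii * ii + 1) / 2 = 1); last by rewrite Hi addNr mul0r subr0.
  by field.
- rewrite -[RHS](_ : 1 - (ii * ii + 1) / 2 = 1); last by rewrite Hi addNr mul0r subr0.
  by field.
- rewrite -[RHS](_ : (ii * ii + 1) / 2 = 0); last by rewrite Hi addNr mul0r.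
  by field.
Qed.


Lemma app_NOT n (w : vec n) x : (0 < n)%N -> app (NOTg n) w x = w (fNOT x).
Proof. move=> Hn; exact: (app_perm w x (fNOT_inv Hn)). Qed.

Lemma app_XOR m n (w : vec (m + n)) x : (0 < m)%N -> (0 < n)%N ->
  app (XORg m n) w x = w (fXOR x).
Proof. move=> Hm Hn; exact: (app_perm w x (fXOR_inv Hm Hn)). Qed.

Lemma app_TOF m n p (w : vec (m + n + p)) x : (0 < m)%N -> (0 < n)%N -> (0 < p)%N ->
  app (TOFg m n p) w x = w (fTOF x).
Proof. move=> Hm Hn Hp; exact: (app_perm w x (fTOF_inv Hm Hn Hp)). Qed.

Lemma nrm_XOR m n (w : vec (m + n)) : (0 < m)%N -> (0 < n)%N ->
  nrm (app (XORg m n) w) = nrm w.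
Proof.
move=> Hm Hn; rewrite (nrm_ext (fun x => app_XOR w x Hm Hn)).
exact: (nrm_perm w (fXOR_inv Hm Hn)).
Qed.

Lemma nrm_TOF m n p (w : vec (m + n + p)) : (0 < m)%N -> (0 < n)%N -> (0 < p)%N ->
  nrm (app (TOFg m n p) w) = nrm w.
Proof.
move=> Hm Hn Hp; rewrite (nrm_ext (fun x => app_TOF w x Hm Hn Hp)).
exact: (nrm_perm w (fTOF_inv Hm Hn Hp)).
Qed.

Lemma nrm_basis n (e : B n) : nrm (fun u => (u == e)%:R) = 1.
Proof.
rewrite /nrm (eq_bigr (fun u => (e == u)%:R * 1)); first by rewrite sum_ind.
by move=> u _; rewrite conjC_nat eq_sym; case: (_ == _); rewrite ?mulr1 ?mulr0.
Qed.

Lemma nrm_tens (fs : seq blk) : nrm (pF fs 0 : vec (sz fs)) = \prod_(f <- fs) nrm (projT2 f).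
Proof. by rewrite nrm_pF // pS_sq. Qed.

Lemma nrm_psi v b off : nrm (psi v b off) = 1.
Proof.
elim: b off => [n| | |a IH|a IH|a IH|a IHa c IHc|a IHa c IHc d IHd] off /=;
  rewrite ?nrm_basis //.
- by rewrite (nrm_ext (fun x => app_NOT _ x (At_pos a))) (nrm_perm _ (fNOT_inv (At_pos a))).
- by rewrite nrm_sqrtI ?At_pos.
- by rewrite nrm_sqrtNOT ?At_pos.
- rewrite nrm_XOR ?At_pos //.
  have := nrm_tens [:: mkb (psi v a off); mkb (psi v c (off + At a))].
  by rewrite /sz /= addn0 !big_cons big_nil IHa IHc !mul1r => ->.
- rewrite nrm_TOF ?At_pos //.
  have := nrm_tens [:: mkb (psi v a off); mkb (psi v c (off + At a)); mkb (psi v d (off + At a + At c))].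
  by rewrite /sz /= addn0 addnA !big_cons big_nil IHa IHc IHd !mul1r => ->.
Qed.


Definition Hol (vals : Defs.form -> seq (nat -> bool)) (g : Defs.form) (i : nat) : op (At g) :=
  fun x y => (size (vals g))%:R^-1 * \sum_(v <- vals g) outer (Psi v g i) x y.
Arguments Hol vals g i : clear implicits.

Lemma pS_mkpsi v l off : pS (map sqb (mkpsi v l off)) = 1.
Proof.
elim: l off => [|b l IH] off //=.
by rewrite IH mulr1; apply: nrm_psi.
Qed.

Lemma nrm_Psi v g i : nrm (Psi v g i) = 1.
Proof. by rewrite /Psi nrm_pF ?pS_mkpsi // sz_mkpsi sumn_level. Qed.

Lemma Kinv_K n : (0 < n)%N -> (n%:R : C)^-1 * n%:R = 1.
Proof. by move=> Hn; rewrite mulVf // pnatr_eq0 -lt0n. Qed.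

Lemma sum_const_seq (T : Type) (s : seq T) (c : C) : \sum_(v <- s) c = (size s)%:R * c.
Proof. by elim: s => [|a s IH]; rewrite ?big_nil ?big_cons ?mul0r // IH /= -addn1 natrD mulrDl mul1r addrC. Qed.

Lemma density_Hol vals g i : (0 < size (vals g))%N -> is_density (Hol vals g i).
Proof.
move=> Hs; split.
  move=> w.
  have -> : \sum_x \sum_y (w x)^* * Hol vals g i x y * w y = (size (vals g))%:R^-1 * \sum_(v <- vals g)
     ((\sum_x (w x)^* * Psi v g i x) * (\sum_x (w x)^* * Psi v g i x)^*).
    rewrite /Hol.
    transitivity (\sum_x \sum_y \sum_(v <- vals g) (size (vals g))%:R^-1 *
        (((w x)^* * Psi v g i x) * ((w y)^* * Psi v g i y)^*)).
      apply: eq_bigr => x _; apply: eq_bigr => y _.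
      rewrite !big_distrr /= big_distrl /=; apply: eq_bigr => v _.
      rewrite /outer rmorphM /= conjCK; ring.
    under eq_bigr => x _ do rewrite exchange_big /=.
    rewrite exchange_big /= big_distrr /=; apply: eq_bigr => v _.
    rewrite rmorph_sum big_distrl /= big_distrr /=; apply: eq_bigr => x _.
    rewrite big_distrr /= big_distrr /=; apply: eq_bigr => y _.
    ring.
  apply: mulr_ge0; first by rewrite invr_ge0 ler0n.
  by apply: sumr_ge0 => v _; apply: mul_conjC_ge0.
rewrite /trop /Hol -big_distrr /= exchange_big /=.
rewrite (eq_bigr (fun _ => 1)); first by rewrite sum_const_seq mulr1 Kinv_K.
move=> v _; exact: nrm_Psi.
Qed.

Lemma chan_Hol vals g i : (0 < i)%N ->
  opeq (Hol vals g i) (chan (levelgate Tid g i) (Hol vals g i.+1)).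
Proof.
move=> Hi x y.
rewrite /chan /mulop /Hol /adjop.
set G := levelgate Tid g i.
transitivity ((size (vals g))%:R^-1 * \sum_(v <- vals g)
   (app G (Psi v g i.+1) x * (app G (Psi v g i.+1) y)^*)).
  congr (_ * _); apply: eq_bigr => v _; by rewrite /outer !Psi_step.
rewrite big_distrr /=; symmetry.
transitivity (\sum_z \sum_w \sum_(v <- vals g) (size (vals g))%:R^-1 *
   ((G x z * Psi v g i.+1 z) * (G y w * Psi v g i.+1 w)^*)).
  apply: eq_bigr => z _; rewrite big_distrr /=; apply: eq_bigr => w _.
  rewrite big_distrr /= big_distrl /= big_distrr /=; apply: eq_bigr => v _.
  rewrite /outer !rmorphM /=; ring.
rewrite /G; under [LHS]eq_bigr => z _ do rewrite exchange_big /=.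
rewrite exchange_big /=; apply: eq_bigr => v _.
rewrite /app rmorph_sum big_distrl /= big_distrr /=; apply: eq_bigr => z _.
rewrite big_distrr /= big_distrr /=; apply: eq_bigr => w _.
rewrite !rmorphM /=; ring.
Qed.

Lemma red_mk N v (l : seq Defs.form) j b x y :
  sumn (map At l) = N -> (j < size l)%N -> nth Fa l j = b ->
  red N (outer (pF (mkpsi v l 0) 0)) (offset l j) (At b) x y = outer (psi v b (offset l j)) x y.
Proof.
move=> HN Hj Hb.
have E : l = take j l ++ b :: drop j.+1 l by rewrite -Hb -drop_nth // cat_take_drop.
have Eo : offset l j = sz (mkpsi v (take j l) 0) by rewrite sz_mkpsi.
have -> : mkpsi v l 0 = mkpsi v (take j l) 0 ++ mkb (psi v b (offset l j)) :: mkpsi v (drop j.+1 l) (offset l j + At b).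
  by rewrite {1}E mkpsi_cat /= add0n.
rewrite [X in red _ _ X _]Eo red_pF ?pS_mkpsi //.
rewrite !sz_mkpsi -HN {3}E map_cat sumn_cat /=; lia.
Qed.

Lemma red_lin N (vs : seq (nat -> bool)) (rho : (nat -> bool) -> op N) (c : C) off m x y :
  red N (fun x y => c * \sum_(v <- vs) rho v x y) off m x y =
  c * \sum_(v <- vs) red N (rho v) off m x y.
Proof.
rewrite /red big_distrr /=; under eq_bigr => z _ do rewrite big_distrr /=.
rewrite exchange_big /=; apply: eq_bigr => v _.
by rewrite big_distrr.
Qed.

Lemma red_Hol vals g b i j x y : (j < size (level g i))%N -> nth Fa (level g i) j = b ->
  red (At g) (Hol vals g i) (offset (level g i) j) (At b) x y =
  (size (vals g))%:R^-1 * \sum_(v <- vals g) outer (psi v b (offset (level g i) j)) x y.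
Proof.
move=> Hj Hb; rewrite /Hol red_lin; congr (_ * _); apply: eq_bigr => v _.
by rewrite /Psi red_mk // sumn_level.
Qed.


Lemma Pb_Tid n (b : bool) x y :
  \sum_(z : B n | bit z n.-1 == b) Tn Tid n x z * (Tn Tid n y z)^* =
  ((x == y) && (bit x n.-1 == b))%:R.
Proof.
rewrite big_mkcond /=.
rewrite (eq_bigr (fun z => (x == z)%:R * (if bit x n.-1 == b then (y == x)%:R else 0))).
  rewrite sum_ind (eq_sym y x); by case: (x == y); case: (bit x n.-1 == b).
move=> z _; rewrite !Tn_Tid conjC_nat.
case: (x =P z) => [<-|_].
  by case: ifP => _ //; rewrite mul1r.
by case: ifP => _; rewrite ?mul0r.
Qed.

Lemma P1_Tid n x y : P1 Tid n x y = ((x == y) && bit x n.-1)%:R.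
Proof. by rewrite /P1 -(eq_bigl _ _ (fun z => eqb_id _)) Pb_Tid eqb_id. Qed.

Lemma P0_Tid n x y : P0 Tid n x y = ((x == y) && ~~ bit x n.-1)%:R.
Proof.
rewrite /P0 (eq_bigl (fun z => bit z n.-1 == false)); last by move=> z; rewrite eqbF_neg.
by rewrite Pb_Tid eqbF_neg.
Qed.

Lemma prob_Tid n (rho : op n) : prob Tid rho = \sum_(x | bit x n.-1) rho x x.
Proof.
rewrite /prob /trop /mulop [RHS]big_mkcond /=; apply: eq_bigr => x _.
rewrite (eq_bigr (fun z => (x == z)%:R * (bit x n.-1)%:R * rho z x)); last first.
  by move=> z _; rewrite P1_Tid; case: (x == z); case: (bit x n.-1); rewrite /= ?mul1r ?mul0r ?mulr0.
rewrite (eq_bigr (fun z => (x == z)%:R * ((bit x n.-1)%:R * rho z x))); last first.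
  by move=> z _; rewrite mulrA.
by rewrite sum_ind; case: (bit x n.-1); rewrite ?mul1r ?mul0r.
Qed.

Lemma prob_ext n (r r' : op n) : opeq r r' -> prob Tid r = prob Tid r'.
Proof. by move=> H; rewrite !prob_Tid; apply: eq_bigr => x _; rewrite H. Qed.

Definition NormOK (vals : Defs.form -> seq (nat -> bool)) : Prop :=
  forall g b i j i' j', occurs g b i j -> occurs g b i' j' -> forall x y,
    \sum_(v <- vals g) outer (psi v b (offset (level g i) j)) x y =
    \sum_(v <- vals g) outer (psi v b (offset (level g i') j')) x y.

Lemma ctx_Hol vals g b i j x y : occurs g b i j ->
  ctx (Hol vals) g b i j x y =
  (size (vals g))%:R^-1 * \sum_(v <- vals g) outer (psi v b (offset (level g i) j)) x y.
Proof. by case=> _ Hj Hb; rewrite /ctx red_Hol. Qed.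

Lemma B1_false (x : B 1) : (x == z0 1) = ~~ bit x 0.
Proof.
apply/eqP/idP => [->|H]; first by rewrite bit_z0.
apply: bitP => k; rewrite ltnS leqn0 => /eqP ->; by rewrite bit_z0; apply/negbTE.
Qed.

Lemma B1_true (x : B 1) : (x == [ffun => true]) = bit x 0.
Proof.
apply/eqP/idP => [->|H].
  by rewrite (@bit_fn _ _ (fun _ => true)) // => i; rewrite ffunE.
apply: bitP => k; rewrite ltnS leqn0 => /eqP ->.
by rewrite H (@bit_fn _ _ (fun _ => true)) // => i; rewrite ffunE.
Qed.

Lemma holistic_Hol vals : (forall g, (0 < size (vals g))%N) -> NormOK vals ->
  holistic Tid (Hol vals).
Proof.
move=> Hs HN; split.
- by move=> g i _; apply: density_Hol.
- by move=> g i /andP[Hi _]; apply: chan_Hol.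
- move=> g b i j i' j' H1 H2 x y; rewrite !ctx_Hol //; congr (_ * _); exact: HN.
- move=> g i j H x y; rewrite ctx_Hol // P0_Tid.
  rewrite (eq_bigr (fun _ => ((x == z0 1) && (y == z0 1))%:R)); last first.
    by move=> v _; rewrite /outer /= conjC_nat -natrM mulnb.
  rewrite sum_const_seq mulrA Kinv_K // mul1r !B1_false.
  case: (x =P y) => [->|Hne] /=; first by rewrite andbb.
  case Hx: (bit x 0); case Hy: (bit y 0) => //=.
  by case: Hne; apply: bitP => k; rewrite ltnS leqn0 => /eqP ->; rewrite Hx Hy.
- move=> g i j H x y; rewrite ctx_Hol // P1_Tid.
  rewrite (eq_bigr (fun _ => ((x == [ffun => true]) && (y == [ffun => true]))%:R)); last first.
    by move=> v _; rewrite /outer /= conjC_nat -natrM mulnb.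
  rewrite sum_const_seq mulrA Kinv_K // mul1r !B1_true.
  case: (x =P y) => [->|Hne] /=; first by rewrite andbb.
  case Hx: (bit x 0); case Hy: (bit y 0) => //=.
  by case: Hne; apply: bitP => k; rewrite ltnS leqn0 => /eqP ->; rewrite Hx Hy.
Qed.


Lemma psi_const v (Hv : forall k k', v k = v k') b o o' u : psi v b o u = psi v b o' u.
Proof.
elim: b o o' u => [n| | |a IH|a IH|a IH|a IHa c IHc|a IHa c IHc d IHd] o o' u /=.
- by rewrite (Hv o o').
- by [].
- by [].
- by apply: eq_bigr => y _; rewrite (IH o o').
- by apply: eq_bigr => y _; rewrite (IH o o').
- by apply: eq_bigr => y _; rewrite (IH o o').
- by apply: eq_bigr => y _; rewrite (IHa o o') (IHc _ (o' + At a)).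
- apply: eq_bigr => y _.
  by rewrite (IHa o o') (IHc _ (o' + At a)) (IHd _ (o' + At a + At c)).
Qed.

Fixpoint form_eqb (a b : Defs.form) : bool :=
  match a, b with
  | Atom n, Atom m => n == m
  | Tr, Tr => true
  | Fa, Fa => true
  | Neg a, Neg b => form_eqb a b
  | Sqid a, Sqid b => form_eqb a b
  | Sqneg a, Sqneg b => form_eqb a b
  | Xor a c, Xor b d => form_eqb a b && form_eqb c d
  | Tof a c e, Tof b d f => [&& form_eqb a b, form_eqb c d & form_eqb e f]
  | _, _ => false
  end.

Lemma form_eqb_sound a b : form_eqb a b -> a = b.
Proof.
elim: a b => [n| | |a IH|a IH|a IH|a IHa c IHc|a IHa c IHc d IHd] [m| | |b|b|b|b e|b e f] //=.
- by move/eqP->.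
- by move/IH->.
- by move/IH->.
- by move/IH->.
- by case/andP=> /IHa -> /IHc ->.
- by case/and3P=> /IHa -> /IHc -> /IHd ->.
Qed.

Lemma form_eqb_refl a : form_eqb a a.
Proof. by elim: a => //= *; rewrite ?eqxx ?andbT //; apply/andP; split; try apply/andP; try split. Qed.

Definition atom_ok (vs : seq (nat -> bool)) (b : Defs.form) (o o' : nat) : bool :=
  match b with
  | Atom _ => count (fun v => v o) vs == count (fun v => v o') vs
  | Tr | Fa => true
  | _ => false
  end.

Definition pairok vs b b' o o' := ~~ form_eqb b b' || (o == o') || atom_ok vs b o o'.

Definition check (g : Defs.form) (vs : seq (nat -> bool)) : bool :=
  all (fun i => all (fun j => all (fun i' => all (fun j' =>
    pairok vs (nth Fa (level g i) j) (nth Fa (level g i') j')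
       (offset (level g i) j) (offset (level g i') j'))
    (iota 0 (size (level g i')))) (iota 1 (height g)))
    (iota 0 (size (level g i)))) (iota 1 (height g)).

Lemma sum_count (vs : seq (nat -> bool)) o (F : bool -> C) :
  \sum_(v <- vs) F (v o) =
  (count (fun v => v o) vs)%:R * F true + (count (fun v => ~~ v o) vs)%:R * F false.
Proof.
elim: vs => [|v vs IH]; first by rewrite big_nil !mul0r addr0.
rewrite big_cons IH /=; case: (v o) => /=; rewrite !natrD; ring.
Qed.

Lemma count_neg (vs : seq (nat -> bool)) o :
  count (fun v => ~~ v o) vs = (size vs - count (fun v => v o) vs)%N.
Proof. by rewrite -(count_predC (fun v => v o) vs) addKn. Qed.

Lemma check_sound g vs : check g vs -> forall b i j i' j',
  occurs g b i j -> occurs g b i' j' -> forall x y,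
    \sum_(v <- vs) outer (psi v b (offset (level g i) j)) x y =
    \sum_(v <- vs) outer (psi v b (offset (level g i') j')) x y.
Proof.
move=> Hc b i j i' j' [Hi Hj Hb] [Hi' Hj' Hb'] x y.
have Hiota : forall k, (1 <= k <= height g)%N -> k \in iota 1 (height g).
  by move=> k Hk; rewrite mem_iota add1n ltnS.
have Hj1 : j \in iota 0 (size (level g i)) by rewrite mem_iota.
have Hj2 : j' \in iota 0 (size (level g i')) by rewrite mem_iota.
move/allP/(_ i (Hiota _ Hi))/allP/(_ j Hj1)
  /allP/(_ i' (Hiota _ Hi'))/allP/(_ j' Hj2): Hc.
rewrite /pairok Hb Hb' form_eqb_refl /=.
case/orP => [/eqP ->|] //.
move: x y Hb Hb'; case: b => //= n x y Hb Hb'.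
  move/eqP=> Hcnt.
  rewrite (sum_count vs _ (fun c => outer (fun u : B 1 => (u == [ffun => c])%:R) x y)).
  rewrite (sum_count vs _ (fun c => outer (fun u : B 1 => (u == [ffun => c])%:R) x y)).
  by rewrite !count_neg Hcnt.
Qed.


Fixpoint classical (b : Defs.form) : bool :=
  match b with
  | Sqid _ | Sqneg _ => false
  | Neg a => classical a
  | Xor a c => classical a && classical c
  | Tof a c d => [&& classical a, classical c & classical d]
  | _ => true
  end.

Fixpoint lastval (v : nat -> bool) (b : Defs.form) (o : nat) : bool :=
  match b with
  | Atom _ => v o
  | Tr => true
  | Fa => false
  | Neg a => ~~ lastval v a o
  | Sqid _ | Sqneg _ => false
  | Xor a c => addb (lastval v a o) (lastval v c (o + At a))
  | Tof a c d => addb (lastval v a o && lastval v c (o + At a)) (lastval v d (o + At a + At c))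
  end.

Definition catb m n (e1 : B m) (e2 : B n) : B (m + n) :=
  [ffun i : 'I_(m + n) => if (i < m)%N then bit e1 i else bit e2 (i - m)].

Lemma bit_catb m n (e1 : B m) (e2 : B n) k :
  bit (catb e1 e2) k = if (k < m)%N then bit e1 k else bit e2 (k - m).
Proof.
rewrite (@bit_fn _ _ (fun k => if (k < m)%N then bit e1 k else bit e2 (k - m))); last first.
  by move=> i; rewrite ffunE.
case: (ltnP k (m + n)) => Hk /=; first by [].
case: ifP => H; first by rewrite bit_out //; lia.
by rewrite bit_out //; lia.
Qed.

Lemma catb_eq m n (e1 : B m) (e2 : B n) (y : B (m + n)) :
  (restr (m + n) y 0 m == e1) && (restr (m + n) y m n == e2) = (y == catb e1 e2).
Proof.
apply/andP/eqP.
  case=> /eqP H1 /eqP H2; apply: bitP => k Hk; rewrite bit_catb.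
  case: ifP => Hkm.
    by rewrite -H1 bit_restr Hkm add0n.
  by rewrite -H2 bit_restr subnKC ?(negbT Hkm) -?leqNgt //=; [lia | rewrite leqNgt Hkm].
move=> ->; split; apply/eqP; apply: bitP => k Hk; rewrite bit_restr Hk bit_catb /=.
  by rewrite add0n Hk.
have -> : (m + k < m)%N = false by lia.
by rewrite addKn.
Qed.

Lemma natr_and (a b : bool) : (a%:R * b%:R : C) = (a && b)%:R.
Proof. by case: a; case: b; rewrite /= ?mulr1 ?mulr0 ?mul0r. Qed.

Lemma psi_classical v b o : classical b ->
  exists e : B (At b), (forall u, psi v b o u = (u == e)%:R) /\ bit e (At b).-1 = lastval v b o.
Proof.
elim: b o => [n| | |a IH|a IH|a IH|a IHa c IHc|a IHa c IHc d IHd] o //= Hcl.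
- exists [ffun => v o]; split => //.
  by rewrite (@bit_fn _ _ (fun _ => v o)) // => i; rewrite ffunE.
- exists [ffun => true]; split => //.
  by rewrite (@bit_fn _ _ (fun _ => true)) // => i; rewrite ffunE.
- by exists (z0 1); split => //; rewrite bit_z0.
- have [e [He Hl]] := IH o Hcl.
  have Ha := At_pos a.
  exists (fNOT e); split.
    by move=> u; rewrite app_NOT // He (inv_eq (fNOT_inv Ha)).
  by rewrite /fNOT bit_setbit_eq ?Hl //; lia.
- case/andP: Hcl => Hca Hcc.
  have [ea [Hea Hla]] := IHa o Hca.
  have [ec [Hec Hlc]] := IHc (o + At a) Hcc.
  have Ha := At_pos a; have Hc := At_pos c.
  exists (fXOR (catb ea ec)); split.
    move=> u; rewrite app_XOR //= Hea Hec mulr1 natr_and add0n catb_eq.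
    by rewrite (inv_eq (fXOR_inv Ha Hc)).
  rewrite /fXOR bit_setbit_eq; last by lia.
  rewrite !bit_catb -Hla -Hlc.
  have -> : ((At a).-1 < At a)%N by lia.
  have -> : ((At a + At c).-1 < At a)%N = false by lia.
  by have -> : ((At a + At c).-1 - At a = (At c).-1)%N by lia.
- case/and3P: Hcl => Hca Hcc Hcd.
  have [ea [Hea Hla]] := IHa o Hca.
  have [ec [Hec Hlc]] := IHc (o + At a) Hcc.
  have [ed [Hed Hld]] := IHd (o + At a + At c) Hcd.
  have Ha := At_pos a; have Hc := At_pos c; have Hd := At_pos d.
  exists (fTOF (catb (catb ea ec) ed)); split.
    move=> u; rewrite app_TOF //= Hea Hec Hed mulr1 !natr_and add0n.
    rewrite -(inv_eq (fTOF_inv Ha Hc Hd)) -catb_eq -catb_eq.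
    rewrite !restr_restr ?add0n ?addn0 ?leq_addr //.
    by rewrite andbA.
  rewrite /fTOF bit_setbit_eq; last by lia.
  rewrite !bit_catb -Hla -Hlc -Hld.
  have -> : ((At a).-1 < At a + At c)%N by lia.
  have -> : ((At a).-1 < At a)%N by lia.
  have -> : ((At a + At c).-1 < At a + At c)%N by lia.
  have -> : ((At a + At c).-1 < At a)%N = false by lia.
  have -> : ((At a + At c + At d).-1 < At a + At c)%N = false by lia.
  have -> : ((At a + At c).-1 - At a = (At c).-1)%N by lia.
  by have -> : ((At a + At c + At d).-1 - (At a + At c) = (At d).-1)%N by lia.
Qed.

Lemma sum_bool_count (vs : seq (nat -> bool)) (p : (nat -> bool) -> bool) :
  \sum_(v <- vs) ((p v)%:R : C) = (count p vs)%:R.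
Proof. by elim: vs => [|v vs IH]; rewrite ?big_nil ?big_cons // IH /= natrD. Qed.

Lemma prob_basis n (e : B n) :
  \sum_(x | bit x n.-1) outer (fun u : B n => (u == e)%:R) x x = (bit e n.-1)%:R.
Proof.
rewrite big_mkcond /=.
rewrite (eq_bigr (fun x => (e == x)%:R * (bit e n.-1)%:R)); first by rewrite sum_ind.
move=> x _; rewrite /outer conjC_nat (eq_sym x e).
by case: (e =P x) => [->|_]; case: (bit x n.-1); rewrite ?mulr1 ?mul0r ?mulr0.
Qed.

Lemma prob_ctx vals g b i j : occurs g b i j -> classical b ->
  prob Tid (ctx (Hol vals) g b i j) =
  (size (vals g))%:R^-1 * (count (fun v => lastval v b (offset (level g i) j)) (vals g))%:R.
Proof.
move=> Ho Hcl; rewrite prob_Tid.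
rewrite (eq_bigr (fun x => (size (vals g))%:R^-1 *
   \sum_(v <- vals g) outer (psi v b (offset (level g i) j)) x x)); last first.
  by move=> x _; rewrite ctx_Hol.
rewrite -big_distrr /= exchange_big /= -sum_bool_count; congr (_ * _).
apply: eq_bigr => v _.
have [e [He Hl]] := psi_classical v (offset (level g i) j) Hcl.
rewrite -Hl -prob_basis; apply: eq_bigr => x _.
by rewrite /outer !He.
Qed.

Lemma unitary2_Tid : unitary2 Tid.
Proof.
split=> a b; rewrite big_bool /Tid; case: a; case: b;
  by rewrite /= ?conjC_nat ?mulr1 ?mulr0 ?mul0r ?addr0 ?add0r.
Qed.

Lemma not_entails vals g a b i j i' j' :
  (forall g, (0 < size (vals g))%N) -> NormOK vals ->
  subf a g -> subf b g -> occurs g a i j -> occurs g b i' j' ->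
  classical a -> classical b ->
  (count (fun v => lastval v b (offset (level g i') j')) (vals g) <
   count (fun v => lastval v a (offset (level g i) j)) (vals g))%N ->
  ~ entails a b.
Proof.
move=> Hs HN Sa Sb Oa Ob Ca Cb Hlt H.
have := H Tid unitary2_Tid g Sa Sb (Hol vals) (holistic_Hol Hs HN) i j i' j' Oa Ob.
rewrite !prob_ctx // ler_pM2l ?invr_gt0 ?ltr0n ?Hs // ler_nat.
by rewrite leqNgt Hlt.
Qed.

Lemma entails_refl a : entails a a.
Proof.
move=> T HT g Sa _ Hol Hh i j i' j' O1 O2.
case: Hh => _ _ Hn _ _.
have E := Hn g a i j i' j' O1 O2.
have -> : prob T (ctx Hol g a i j) = prob T (ctx Hol g a i' j').
  by rewrite /prob /trop /mulop; apply: eq_bigr => x _; apply: eq_bigr => z _; rewrite E.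
exact: Order.POrderTheory.lexx.
Qed.


Definition fa := Atom 0.
Definition fb := Atom 1.
Definition fd := Atom 2.

Definition g1 := And fa fa.
Definition g2 := Xor (And fa fb) (And fb fa).
Definition g3 := Xor (And fa (And fb fd)) (And (And fa fb) fd).
Definition g4 := Xor (And (And fa fb) fd) (And fa (And fb fd)).
Definition g5 := Xor (And fa (Or fb fd)) (Or (And fa fb) (And fa fd)).
Definition g6 := Xor (Or (And fa fb) (And fa fd)) (And fa (Or fb fd)).
Definition g8 := And fa (Neg fa).
Definition g9 := Xor (Xor fa fb) (Xor fb fa).
Definition ga := Xor (Xor fa fb) (Or fa fb).
Definition gb := Xor (Xor fa fb) (Or (Neg fa) (Neg fb)).

Definition vl (s : seq nat) : nat -> bool := fun o => o \in s.

Definition specs : seq (Defs.form * seq (nat -> bool)) :=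
  [:: (g1, [:: vl [:: 0]; vl [:: 1]]);
      (g2, [:: vl [:: 0; 1; 3]; vl [:: 4]]);
      (g3, [:: vl [:: 0; 1; 2; 5; 6]; vl [:: 8]]);
      (g4, [:: vl [:: 0; 1; 3; 5; 6]; vl [:: 7]]);
      (g5, [:: vl [:: 0; 1; 5; 9]; vl [:: 2; 6; 8]]);
      (g6, [:: vl [:: 0; 1; 7]; vl [:: 3; 4; 8; 9]]);
      (g8, [:: vl [:: 0]; vl [:: 1]]);
      (g9, [:: vl [:: 0]; vl [:: 1; 2; 3]]);
      (ga, [:: vl [:: 0]; vl [:: 1; 2; 3]]);
      (gb, [:: vl [:: 0; 2; 3]; vl [:: 1]])].

Fixpoint lookup (s : seq (Defs.form * seq (nat -> bool))) (g : Defs.form) :=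
  match s with
  | [::] => None
  | p :: s' => if form_eqb g p.1 then Some p.2 else lookup s' g
  end.

Definition vals (g : Defs.form) : seq (nat -> bool) :=
  if lookup specs g is Some vs then vs else [:: fun _ => false].

Lemma specs_ok : all (fun p => check p.1 p.2 && (0 < size p.2)%N) specs.
Proof. by vm_compute. Qed.

Lemma lookup_ok s g vs : all (fun p => check p.1 p.2 && (0 < size p.2)%N) s ->
  lookup s g = Some vs -> check g vs && (0 < size vs)%N.
Proof.
elim: s => [|p s IH] //= /andP[Hp Hs].
case E: (form_eqb g p.1); last exact: IH.
by case=> <-; rewrite (form_eqb_sound E).
Qed.

Lemma vals_pos g : (0 < size (vals g))%N.
Proof.
rewrite /vals; case E: (lookup specs g) => [vs|] //.
by case/andP: (lookup_ok specs_ok E).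
Qed.

Lemma vals_norm : NormOK vals.
Proof.
move=> g b i j i' j' O1 O2 x y; rewrite /vals.
case E: (lookup specs g) => [vs|].
  by case/andP: (lookup_ok specs_ok E) => Hc _; exact: (check_sound Hc O1 O2).
rewrite !big_cons !big_nil; congr (_ + _).
have P := @psi_const (fun _ => false) (fun _ _ => erefl) b (offset (level g i) j) (offset (level g i') j').
by rewrite /outer !P.
Qed.

Fixpoint subfb (a g : Defs.form) : bool :=
  form_eqb a g ||
  match g with
  | Atom _ | Tr | Fa => false
  | Neg b | Sqid b | Sqneg b => subfb a b
  | Xor b c => subfb a b || subfb a c
  | Tof b c d => [|| subfb a b, subfb a c | subfb a d]
  end.

Lemma subfb_sound a g : subfb a g -> subf a g.
Proof.
elim: g => [n| | |b IH|b IH|b IH|b IHb c IHc|b IHb c IHc d IHd] /=;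
  case/orP => [/form_eqb_sound -> |]; try (by left); move=> H; right => //.
- by apply: IH.
- by apply: IH.
- by apply: IH.
- by case/orP: H => H; [left; apply: IHb | right; apply: IHc].
- by case/or3P: H => H; [left; apply: IHb | right; left; apply: IHc | right; right; apply: IHd].
Qed.

Ltac ne_tac g i j i' j' :=
  apply: (@not_entails vals g _ _ i j i' j' vals_pos vals_norm);
  [ apply: subfb_sound; vm_compute; reflexivity
  | apply: subfb_sound; vm_compute; reflexivity
  | split; vm_compute; reflexivity
  | split; vm_compute; reflexivity
  | vm_compute; reflexivity
  | vm_compute; reflexivity
  | vm_compute; reflexivity ].

Theorem theorem5p2 :
  (exists a, ~ entails a (And a a)) /\
  (exists a b, ~ entails (And a b) (And b a)) /\
  (exists a b d, ~ entails (And a (And b d)) (And (And a b) d)) /\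
  (exists a b d, ~ entails (And (And a b) d) (And a (And b d))) /\
  (exists a b d, ~ entails (And a (Or b d)) (Or (And a b) (And a d))) /\
  (exists a b d, ~ entails (Or (And a b) (And a d)) (And a (Or b d))) /\
  (exists a b d, entails d a /\ entails d b /\ ~ entails d (And a b)) /\
  (exists a b, ~ entails (And a (Neg a)) b) /\
  (exists a b, ~ entails (Xor a b) (Xor b a)) /\
  (exists a b, ~ entails (Xor a b) (Or a b) /\ ~ entails (Xor a b) (Or (Neg a) (Neg b))).
Proof.
have H1 : ~ entails fa (And fa fa) by ne_tac g1 2%N 0%N 1%N 0%N.
split; first by exists fa.
split; first by exists fa, fb; ne_tac g2 2%N 0%N 2%N 1%N.
split; first by exists fa, fb, fd; ne_tac g3 2%N 0%N 2%N 1%N.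
split; first by exists fa, fb, fd; ne_tac g4 2%N 0%N 2%N 1%N.
split; first by exists fa, fb, fd; ne_tac g5 2%N 0%N 2%N 1%N.
split; first by exists fa, fb, fd; ne_tac g6 2%N 0%N 2%N 1%N.
split; first by exists fa, fa, fa; split; [exact: entails_refl | split; [exact: entails_refl | exact: H1]].
split; first by exists fa, Fa; ne_tac g8 1%N 0%N 2%N 2%N.
split; first by exists fa, fb; ne_tac g9 2%N 0%N 2%N 1%N.
by exists fa, fb; split; [ne_tac ga 2%N 0%N 2%N 1%N | ne_tac gb 2%N 0%N 2%N 1%N].
Qed.
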